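(* For $1\le i\le m$ let $V^m_i$ be the $m\times m$ matrix whose $k$-th column is $(1,x_k,x_k^2,\dots,x_k^{m-i},y_k,y_k^2,\dots,y_k^{i-1})^T$. Then on $U^m_B$, for $1\le i\le m-1$, $$\sigma^y_m\det(V^m_i)=\pm\,t^{m-i}\det(V^m_{i+1}).$$ Consequently, with $G_1=\prod_{1\le a<b\le m}(x_a-x_b)$ and $G_i=\dfrac{(\sigma^y_m)^{i-1}}{t^{(i-1)(m-i/2)}}G_1$ for $2\le i\le m$, one has $G_i=\pm\det V^m_i$ for all $i$; in particular each $G_i$ is a regular function on $U^m_B$, $G_m=\pm\prod_{a<b}(y_a-y_b)$, and $\sigma^x_{m-i}G_{i+1}=\sigma^y_iG_i$ for $1\le i\le m-1$.
   Context: Local model: $B$ is an irreducible base with a regular function $t$, $U=\{xy=t\}\subset\mathbb A^2\times B$, and $U^m_B\subset\mathbb A^{2m}\times B$ is given by $x_1y_1=\dots=x_my_m=t$. $\sigma^x_i,\sigma^y_i$ are the elementary symmetric functions of the $x_k$, resp. the $y_k$. *)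

(* Defs.v *)
From HB Require Import structures.
From mathcomp Require Import all_boot all_order all_algebra.
Unset Printing Implicit Defensive.
Import Order.TTheory GRing.Theory Num.Theory.
Local Open Scope ring_scope.

Definition elsym (R : comPzRingType) (m j : nat) (z : 'I_m -> R) : R :=
  \sum_(A : {set 'I_m} | #|A| == j) \prod_(k in A) z k.
Arguments elsym {R} m j z.

Definition Vmat (R : comPzRingType) (m i : nat) (x y : 'I_m -> R) : 'M[R]_m :=
  \matrix_(r < m, k < m)
    if (r <= m - i)%N then x k ^+ r else y k ^+ (r - (m - i))%N.
Arguments Vmat {R} m i x y.

Definition vdprod (R : comPzRingType) (m : nat) (z : 'I_m -> R) : R :=
  \prod_(a < m) \prod_(b < m | (a < b)%N) (z a - z b).
Arguments vdprod {R} m z.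

(* G_i = (sigma^y_m)^(i-1) / t^((i-1)(m - i/2)) * G_1, with G_1 = vdprod x.
   Note (i-1)(m - i/2) = (i-1)(2m-i)/2, which is an integer. *)
Definition Gfun (R : comUnitRingType) (m i : nat) (t : R) (x y : 'I_m -> R) : R :=
  (elsym m m y) ^+ i.-1 / t ^+ ((i.-1 * (2 * m - i)) %/ 2)%N * vdprod m x.
Arguments Gfun {R} m i t x y.

(* Main.v *)
Require Import Defs.
From HB Require Import structures.
From mathcomp Require Import all_boot all_order all_algebra.
Import Order.TTheory GRing.Theory Num.Theory.
Local Open Scope ring_scope.
From mathcomp Require Import all_fingroup.
From Stdlib Require Import Lia.

Ltac nlia := repeat match goal with H : is_true (_ <= _)%N |- _ => apply (elimT ssrnat.leP) in H
  | H : is_true (~~ (_ == _)) |- _ => apply (elimN eqP) in H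
  | H : is_true (_ == _) |- _ => apply (elimT eqP) in H end;
 try (apply/ssrnat.leP); unfold subn, addn, muln in *; lia.

Definition fperm (n i : nat) (r : 'I_n.+1) : 'I_n.+1 :=
  inord (if (r == 0 :> nat)%N then (n.+1 - i)%N else if (r <= n.+1 - i)%N then r.-1 else r).
Definition gperm (n i : nat) (r : 'I_n.+1) : 'I_n.+1 :=
  inord (if (r == n.+1 - i :> nat)%N then 0%N else if (r < n.+1 - i)%N then r.+1 else r).

Lemma fpermE n i (r : 'I_n.+1) : (1 <= i)%N ->
  (fperm n i r : nat) = (if (r == 0 :> nat)%N then (n.+1 - i)%N else if (r <= n.+1 - i)%N then r.-1 else r).
Proof.
move=> h1; have hr := ltn_ord r; rewrite /fperm inordK //.
case: ifP => _; first by nlia.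
case: ifP => _ //; nlia.
Qed.

Lemma gpermE n i (r : 'I_n.+1) : (1 <= i)%N ->
  (gperm n i r : nat) = (if (r == n.+1 - i :> nat)%N then 0%N else if (r < n.+1 - i)%N then r.+1 else r).
Proof.
move=> h1; have hr := ltn_ord r; rewrite /gperm inordK //.
case: ifP => _ //.
case: ifP => H //; nlia.
Qed.

Lemma fpermK n i : (1 <= i)%N -> (i <= n)%N -> cancel (fperm n i) (gperm n i).
Proof.
move=> h1 h2 r; apply: val_inj; have hr := ltn_ord r.
rewrite /= gpermE // fpermE //.
have [r0|rn0] := eqVneq (r : nat) 0%N.
  by rewrite r0 /= eqxx.
case: (leqP r (n.+1 - i)) => hle.
  have -> : (r.-1 == n.+1 - i :> nat)%N = false by apply/negbTE/eqP; nlia.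
  have -> : (r.-1 < n.+1 - i)%N by nlia.
  nlia.
have -> : (r == n.+1 - i :> nat)%N = false by apply/negbTE/eqP; nlia.
by have -> : (r < n.+1 - i)%N = false by apply/negbTE; nlia.
Qed.

Lemma keymx n i (R : comPzRingType) (t : R) (x y : 'I_n.+1 -> R)
  (hxy : forall k, x k * y k = t) (h1 : (1 <= i)%N) (h2 : (i <= n)%N) :
  Vmat n.+1 i x y *m diag_mx (\row_k y k) =
  diag_mx (\row_(r < n.+1) (if (1 <= r <= n.+1 - i)%N then t else 1))
    *m row_perm (perm (can_inj (fpermK n i h1 h2))) (Vmat n.+1 i.+1 x y).
Proof.
apply/matrixP => r k; rewrite mul_mx_diag mul_diag_mx !mxE permE fpermE //.
have hr := ltn_ord r.
have [r0|rn0] := eqVneq (r : nat) 0%N.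
  rewrite r0 /= expr0 !mul1r.
  have -> : (n.+1 - i <= n.+1 - i.+1)%N = false by apply/negbTE; nlia.
  have -> : (n.+1 - i - (n.+1 - i.+1) = 1)%N by nlia.
  by rewrite expr1.
have r1 : (1 <= r)%N by nlia.
rewrite r1 /=.
case: (leqP r (n.+1 - i)) => hle.
  have -> : (r.-1 <= n.+1 - i.+1)%N by nlia.
  have er : (r : nat) = r.-1.+1 by nlia.
  by rewrite er exprS mulrAC hxy.
have -> : (r <= n.+1 - i.+1)%N = false by apply/negbTE; nlia.
have -> : (r - (n.+1 - i.+1) = (r - (n.+1 - i)).+1)%N by nlia.
by rewrite exprSr mul1r.
Qed.

Lemma elsym_all m (R : comPzRingType) (z : 'I_m -> R) : elsym m m z = \prod_k z k.
Proof.
rewrite /elsym (big_pred1 setT); last first.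
  move=> A /=; rewrite eqEcard subsetT cardsT card_ord /= eqn_leq.
  by have := max_card (pred_of_set A); rewrite card_ord => ->.
by apply: eq_bigl => k; rewrite in_setT.
Qed.

Lemma prod_c n i (R : comPzRingType) (t : R) : (1 <= i)%N -> (i <= n)%N ->
  \prod_(r < n.+1) (if (1 <= r <= n.+1 - i)%N then t else 1) = t ^+ (n.+1 - i).
Proof.
move=> h1 h2.
rewrite -(big_mkord xpredT (fun r : nat => if (1 <= r <= n.+1 - i)%N then t else 1)).
rewrite (big_cat_nat _ (n:=1)) //.
rewrite (@big_cat_nat _ _ _ ((n.+1 - i).+1) 1 n.+1) /=; [|by nlia|by nlia].
rewrite big_nat1 /= mul1r.
rewrite (eq_big_nat _ _ (F2 := fun _ => t)); last first.
  by move=> r /andP[ha hb]; rewrite ha /=; have -> : (r <= n.+1 - i)%N by nlia.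
rewrite prodr_const_nat subSS subn0.
rewrite (eq_big_nat _ _ (F2 := fun _ => 1)); last first.
  move=> r /andP[ha hb]; have -> : (r <= n.+1 - i)%N = false by (apply/negbTE; nlia).
  by rewrite andbF.
by rewrite big1_eq mulr1.
Qed.

Lemma keyL n i : (1 <= i)%N -> (i <= n)%N -> exists s : bool,
  forall (R : comPzRingType) (t : R) (x y : 'I_n.+1 -> R), (forall k, x k * y k = t) ->
  elsym n.+1 n.+1 y * \det (Vmat n.+1 i x y) = (-1) ^+ s * t ^+ (n.+1 - i) * \det (Vmat n.+1 i.+1 x y).
Proof.
move=> h1 h2; exists (odd_perm (perm (can_inj (fpermK n i h1 h2)))) => R t x y hxy.
have := congr1 determinant (keymx n i R t x y hxy h1 h2).
rewrite !det_mulmx !det_diag row_permE det_mulmx det_perm elsym_all.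
under eq_bigr do rewrite mxE.
under [X in _ = X * _]eq_bigr do rewrite mxE.
rewrite prod_c // mulrC => ->.
by rewrite mulrA [t ^+ _ * _]mulrC.
Qed.

Definition vN m : nat := \sum_(a < m) #|[pred b : 'I_m | (a < b)%N]|.

Lemma vd_det m (R : comPzRingType) (z : 'I_m -> R) :
  vdprod m z = (-1) ^+ vN m * \det (Vandermonde m (\row_k z k)).
Proof.
rewrite det_Vandermonde /vdprod /vN -prodrXr -big_split /=; apply: eq_bigr => a _.
rewrite -prodrN; apply: eq_big => [b|b _]; rewrite ?inE ?mxE ?opprB //.
Qed.

Lemma V1E m (R : comPzRingType) (x y : 'I_m -> R) :
  Vmat m 1 x y = Vandermonde m (\row_k x k).
Proof.
apply/matrixP => r k; rewrite !mxE; have hr := ltn_ord r.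
by have -> : (r <= m - 1)%N by nlia.
Qed.

Lemma VmE m (R : comPzRingType) (x y : 'I_m -> R) :
  Vmat m m x y = Vandermonde m (\row_k y k).
Proof.
apply/matrixP => r k; rewrite !mxE subnn.
by case: r => [[|r] hr] //=; rewrite ?expr0 ?subn0.
Qed.

Lemma detV1 m (R : comPzRingType) (x y : 'I_m -> R) :
  \det (Vmat m 1 x y) = (-1) ^+ vN m * vdprod m x.
Proof. by rewrite vd_det signrMK V1E. Qed.

Lemma detVm m (R : comPzRingType) (x y : 'I_m -> R) :
  \det (Vmat m m x y) = (-1) ^+ vN m * vdprod m y.
Proof. by rewrite vd_det signrMK VmE. Qed.

Lemma elsym_comp m (R : comPzRingType) (t : R) (x y : 'I_m -> R)
  (hxy : forall k, x k * y k = t) j : (j <= m)%N ->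
  elsym m m y * elsym m j x = t ^+ j * elsym m (m - j) y.
Proof.
move=> hj; rewrite elsym_all /elsym mulr_sumr mulr_sumr.
rewrite [RHS](reindex_inj (@setC_inj _)) /=.
have hc : forall A : {set 'I_m}, (#|~: A| == m - j)%N = (#|A| == j)%N.
  move=> A; have := cardsC A; rewrite card_ord => hA.
  by apply/eqP/eqP => H; nlia.
apply: eq_big => [A|A /eqP hA]; first by rewrite hc.
rewrite (bigID (mem A)) /= mulrAC -big_split /=.
under eq_bigr do rewrite mulrC hxy.
rewrite prodr_const -hA; congr (_ * _).
by apply: eq_bigl => k; rewrite !inE.
Qed.

Lemma eS m i : (1 <= i)%N -> (i < m)%N ->
  ((i.+1.-1 * (2 * m - i.+1)) %/ 2 = (i.-1 * (2 * m - i)) %/ 2 + (m - i))%N.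
Proof.
case: i => // j _ hjm.
have [k ->] : exists k, m = (j.+1 + k.+1)%N by exists (m - j.+2)%N; nlia.
have -> : (2 * (j.+1 + k.+1) - j.+2 = j + 2 * k + 2)%N by nlia.
have -> : (2 * (j.+1 + k.+1) - j.+1 = j + 2 * k + 3)%N by nlia.
have -> : (j.+1 + k.+1 - j.+1 = k.+1)%N by nlia.
have -> : (j.+2.-1 * (j + 2 * k + 2) = k.+1 * 2 + j.+1.-1 * (j + 2 * k + 3))%N.
  rewrite /=; unfold muln, addn; nia.
by rewrite divnMDl // addnC.
Qed.

Lemma part2 n i : (1 <= i <= n.+1)%N -> exists s : bool,
  forall (R : comPzRingType) (t : R) (x y : 'I_n.+1 -> R), (forall k, x k * y k = t) ->
  elsym n.+1 n.+1 y ^+ i.-1 * \det (Vmat n.+1 1 x y)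
    = (-1) ^+ s * t ^+ ((i.-1 * (2 * n.+1 - i)) %/ 2) * \det (Vmat n.+1 i x y).
Proof.
elim: i => [|i IH] //; case: i IH => [|i] IH hi.
  by exists false => R t x y _; rewrite /= mul0n div0n !expr0 !mul1r.
have hi' : (1 <= i.+1 <= n.+1)%N by case/andP: hi => _ hi; rewrite /=; nlia.
have [s1 H1] := IH hi'.
have h2 : (i.+1 <= n)%N by case/andP: hi => _ hi; nlia.
have [s2 H2] := keyL n i.+1 (isT : (1 <= i.+1)%N) h2.
exists (s1 (+) s2) => R t x y hxy.
rewrite eS //.
rewrite [i.+2.-1]/= exprS -mulrA (H1 R t x y hxy) mulrCA (H2 R t x y hxy) signr_addb exprD.
rewrite -!mulrA; congr (_ * _); by rewrite mulrCA.
Qed.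

Lemma Gt n i (R : comUnitRingType) (t : R) (x y : 'I_n.+1 -> R) : t \is a GRing.unit ->
  Gfun n.+1 i t x y * t ^+ ((i.-1 * (2 * n.+1 - i)) %/ 2) = elsym n.+1 n.+1 y ^+ i.-1 * vdprod n.+1 x.
Proof. by move=> ht; rewrite /Gfun mulrAC divrK // unitrX. Qed.

Lemma G2 n i : (1 <= i <= n.+1)%N -> exists s : bool,
  forall (R : comUnitRingType) (t : R) (x y : 'I_n.+1 -> R),
  (forall k, x k * y k = t) -> t \is a GRing.unit ->
  Gfun n.+1 i t x y = (-1) ^+ s * \det (Vmat n.+1 i x y).
Proof.
move=> hi; have [s H] := part2 n i hi; exists (odd (vN n.+1) (+) s) => R t x y hxy ht.
apply: (mulIr (unitrX ((i.-1 * (2 * n.+1 - i)) %/ 2) ht)); rewrite /= Gt //.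
have hv : vdprod n.+1 x = (-1) ^+ vN n.+1 * \det (Vmat n.+1 1 x y) by rewrite detV1 signrMK.
rewrite hv mulrCA (H R t x y hxy) signr_addb signr_odd -!mulrA; congr (_ * (_ * _)); exact: mulrC.
Qed.

Theorem mainTheorem3 (m : nat) (hm : (1 <= m)%N) :
  (* sigma^y_m det V_i = +- t^(m-i) det V_(i+1) on U^m_B, 1 <= i <= m-1 *)
  (forall i : nat, (1 <= i <= m.-1)%N ->
     exists s : bool, forall (R : comPzRingType) (t : R) (x y : 'I_m -> R),
       (forall k, x k * y k = t) ->
       elsym m m y * \det (Vmat m i x y)
         = (-1) ^+ s * t ^+ (m - i) * \det (Vmat m i.+1 x y))
  /\
  (* G_i = +- det V_i, 1 <= i <= m (where G_i is defined, i.e. t invertible) *)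
  (forall i : nat, (1 <= i <= m)%N ->
     exists s : bool, forall (R : comUnitRingType) (t : R) (x y : 'I_m -> R),
       (forall k, x k * y k = t) -> t \is a GRing.unit ->
       Gfun m i t x y = (-1) ^+ s * \det (Vmat m i x y))
  /\
  (* G_m = +- prod_{a<b} (y_a - y_b) *)
  (exists s : bool, forall (R : comUnitRingType) (t : R) (x y : 'I_m -> R),
       (forall k, x k * y k = t) -> t \is a GRing.unit ->
       Gfun m m t x y = (-1) ^+ s * vdprod m y)
  /\
  (* sigma^x_(m-i) G_(i+1) = sigma^y_i G_i, 1 <= i <= m-1 *)
  (forall i : nat, (1 <= i <= m.-1)%N ->
     forall (R : comUnitRingType) (t : R) (x y : 'I_m -> R),
       (forall k, x k * y k = t) -> t \is a GRing.unit ->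
       elsym m (m - i) x * Gfun m i.+1 t x y = elsym m i y * Gfun m i t x y).
Proof.
case: m hm => [|n] // _.
split; first by move=> i /andP[h1 h2]; exact: keyL n i h1 h2.
split; first exact: G2 n.
split.
  have [s H] := G2 n n.+1 (leqnn _).
  exists (s (+) odd (vN n.+1)) => R t x y hxy ht.
  by rewrite (H R t x y hxy ht) detVm signr_addb signr_odd mulrA.
case=> // i /andP[_ /= h2] R t x y hxy ht.
apply: (mulIr (unitrX ((i.+2.-1 * (2 * n.+1 - i.+2)) %/ 2) ht)).
rewrite /= -mulrA Gt // eS // exprD mulrA -(mulrA (elsym _ _ y)) Gt //.
have EC := @elsym_comp n.+1 R t x y hxy (n.+1 - i.+1) (leq_subr _ _).
have h3 : (i.+1 <= n.+1)%N by nlia.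
rewrite subKn // in EC.
rewrite [i.+2.-1]/= exprS !mulrA [elsym _ (_ - _) x * _]mulrC EC.
by rewrite [RHS]mulrC !mulrA.
Qed.
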